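(* Let $\Lambda^\omega_n$ be the ring of extended symmetric polynomials. Then $\Lambda^\omega_n$ is a free module of rank $2^n$ over $\Lambda_n$. Moreover, let $\tilde\omega_1,\dots,\tilde\omega_n\in\Lambda^\omega_n$ be any elements of the form $\tilde\omega_i=\omega_i+\sum_{j>i}f_{ij}\,\omega_j$ with $f_{ij}\in\mathcal P_n$ (such elements exist). Then multiplication in $\Lambda^\omega_n$ induces a ring isomorphism $$\Lambda_n\otimes_{\mathbb Q}\textstyle\bigwedge[\tilde\omega_1,\dots,\tilde\omega_n]\;\xrightarrow{\ \sim\ }\;\Lambda^\omega_n .$$
   Context: Let $\mathcal P_n=\mathbb Q[x_1,\dots,x_n]$ and $\Lambda_n=\mathcal P_n^{S_n}$ the ring of symmetric polynomials. The extended polynomial ring is $\mathcal P^\omega_n=\mathbb Q[x_1,\dots,x_n]\otimes_{\mathbb Q}\bigwedge[\omega_1,\dots,\omega_n]$, where the $\omega_i$ are odd (they anticommute with each other, square to zero, and commute with all $x_j$). The symmetric group $S_n$ acts on $\mathcal P^\omega_n$ by ring automorphisms determined, for the simple transpositions $s_i$ ($1\le i\le n-1$), by $s_i(x_j)=x_{s_i(j)}$ and $s_i(\omega_j)=\omega_j+\delta_{ij}(x_j-x_{j+1})\omega_{j+1}$. The extended divided difference operators are $\partial_i=(\mathrm{id}-s_i)/(x_i-x_{i+1})$ on $\mathcal P^\omega_n$. The ring of extended symmetric polynomials is $\Lambda^\omega_n=(\mathcal P^\omega_n)^{S_n}=\bigcap_{i=1}^{n-1}\ker\partial_i$. *)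

(* Defs.v *)
From mathcomp Require Import all_boot all_algebra all_fingroup.
From mathcomp Require Import mpoly.
Set Implicit Arguments. Unset Strict Implicit. Unset Printing Implicit Defensive.
Import GRing.Theory.
Local Open Scope ring_scope.

(* P_n = Q[x_1..x_n], variables indexed by 'I_n (x_{j+1} <-> 'X_j). *)
Notation Pn n := {mpoly rat[n]}.

(* The extended polynomial ring P^w_n = P_n (x) /\[w_1..w_n], represented by
   its coordinates in the P_n-basis w_S = w_{i1} w_{i2} ... w_{ik}
   (i1 < ... < ik, S = {i1,..,ik}). Addition is pointwise. *)
Definition ext (n : nat) := {ffun {set 'I_n} -> Pn n}.

(* number of inversions: pairs (i in S, j in T) with j < i;
   w_S w_T = (-1)^inv S T w_(S u T) when S, T are disjoint, 0 otherwise *)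
Definition inv n (S T : {set 'I_n}) : nat :=
  #|[set p : 'I_n * 'I_n | (p.1 \in S) && (p.2 \in T) && (p.2 < p.1)%N]|.

Definition emul n (a b : ext n) : ext n :=
  [ffun U => \sum_(S : {set 'I_n}) \sum_(T : {set 'I_n})
     if (S :&: T == set0) && (S :|: T == U)
     then (-1) ^+ inv S T * a S * b T else 0].

Definition cmul n (p : Pn n) (a : ext n) : ext n := [ffun S => p * a S].

Definition eone n : ext n := [ffun S => (S == set0)%:R].
Definition ew n (j : 'I_n) : ext n := [ffun S => (S == [set j])%:R].

Definition wprod n (l : seq (ext n)) : ext n := foldr (@emul n) (eone n) l.

(* The ring endomorphism of P^w_n determined by x_j |-> x_{s(j)} (s a
   permutation) and w_j |-> sw j :
   p w_{i1}...w_{ik} |-> s(p) sw(i1) ... sw(ik). *)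
Definition esubst n (s : 'S_n) (sw : 'I_n -> ext n) (a : ext n) : ext n :=
  \sum_(S : {set 'I_n}) cmul (msym s (a S)) (wprod [seq sw j | j <- enum S]).

(* The simple transposition s_i swapping indices a and b (used with b = a+1):
   s_i(x_j) = x_{s_i(j)}, s_i(w_j) = w_j + delta_{ij} (x_j - x_{j+1}) w_{j+1}. *)
Definition simple_act n (a b : 'I_n) (f : ext n) : ext n :=
  esubst (tperm a b)
    (fun j => if j == a then ew a + cmul ('X_a - 'X_b) (ew b) else ew j) f.

(* Lambda^w_n = (P^w_n)^{S_n}: elements fixed by all simple transpositions
   (equivalently, in the kernel of all divided differences d_i). *)
Definition ext_sym n (f : ext n) : Prop :=
  forall a b : 'I_n, val b = (val a).+1 -> simple_act a b f = f.

(* elements of P_n (x) /\ with coefficients in Lambda_n, i.e.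
   Lambda_n (x) /\[u_1..u_n] in its basis u_S *)
Definition symcoef n (f : ext n) : Prop := forall S, f S \is symmetric.

Definition mult_map n (wt : 'I_n -> ext n) (f : ext n) : ext n :=
  \sum_(S : {set 'I_n}) cmul (f S) (wprod [seq wt j | j <- enum S]).

Definition triangular_form n (wt : 'I_n -> ext n) : Prop :=
  exists F : 'I_n -> 'I_n -> Pn n,
    forall i, wt i = ew i + \sum_(j : 'I_n | (i < j)%N) cmul (F i j) (ew j).

(* Main.v *)
Require Import Defs.
From mathcomp Require Import all_boot all_algebra all_fingroup.
From mathcomp Require Import mpoly.
From mathcomp Require Import ring zify.
Import GRing.Theory.
Local Open Scope ring_scope.
Set Implicit Arguments. Unset Strict Implicit. Unset Printing Implicit Defensive.

Definition eb {n} (S : {set 'I_n}) : ext n := [ffun U => (U == S)%:R].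

Lemma cmulA n (p q : Pn n) (x : ext n) : cmul p (cmul q x) = cmul (p * q) x.
Proof. by apply/ffunP => S; rewrite !ffunE mulrA. Qed.
Lemma cmul1 n (x : ext n) : cmul 1 x = x.
Proof. by apply/ffunP => S; rewrite !ffunE mul1r. Qed.
Lemma cmul0 n (x : ext n) : cmul 0 x = 0.
Proof. by apply/ffunP => S; rewrite !ffunE mul0r. Qed.
Lemma cmulx0 n (p : Pn n) : cmul p 0 = 0.
Proof. by apply/ffunP => S; rewrite !ffunE mulr0. Qed.
Lemma cmulD n (p q : Pn n) (x : ext n) : cmul (p + q) x = cmul p x + cmul q x.
Proof. by apply/ffunP => S; rewrite !ffunE mulrDl. Qed.
Lemma cmulxD n (p : Pn n) (x y : ext n) : cmul p (x + y) = cmul p x + cmul p y.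
Proof. by apply/ffunP => S; rewrite !ffunE mulrDr. Qed.
Lemma cmulN n (p : Pn n) (x : ext n) : cmul (- p) x = - cmul p x.
Proof. by apply/ffunP => S; rewrite !ffunE mulNr. Qed.
Lemma cmulxN n (p : Pn n) (x : ext n) : cmul p (- x) = - cmul p x.
Proof. by apply/ffunP => S; rewrite !ffunE mulrN. Qed.
Lemma cmul_sumx n I (r : seq I) (P : pred I) (F : I -> ext n) (p : Pn n) :
  cmul p (\sum_(i <- r | P i) F i) = \sum_(i <- r | P i) cmul p (F i).
Proof. exact: (big_morph (cmul p) (cmulxD p) (cmulx0 p)). Qed.
Lemma cmul_sum n I (r : seq I) (P : pred I) (F : I -> Pn n) (x : ext n) :
  cmul (\sum_(i <- r | P i) F i) x = \sum_(i <- r | P i) cmul (F i) x.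
Proof. exact: (big_morph (fun p => cmul p x) (fun p q => cmulD p q x) (cmul0 x)). Qed.

Lemma sum_delta {T : finType} {R : nzRingType} (j : T) (F : T -> R) :
  \sum_i (i == j)%:R * F i = F j.
Proof.
rewrite (bigD1 j) //= eqxx mul1r big1 ?addr0 // => i /negbTE ->; by rewrite mul0r.
Qed.
Lemma sum_delta' {T : finType} {R : nzRingType} (j : T) (F : T -> R) :
  \sum_i F i * (i == j)%:R = F j.
Proof.
rewrite (bigD1 j) //= eqxx mulr1 big1 ?addr0 // => i /negbTE ->; by rewrite mulr0.
Qed.

Lemma expand n (x : ext n) : x = \sum_S cmul (x S) (eb S).
Proof.
apply/ffunP => U; rewrite sum_ffunE.
under eq_bigr do rewrite !ffunE eq_sym.
by rewrite sum_delta'.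
Qed.

Definition kk {n} (S T U : {set 'I_n}) : Pn n :=
  if (S :&: T == set0) && (S :|: T == U) then (-1) ^+ Defs.inv S T else 0.

Lemma emulE n (a b : ext n) U :
  emul a b U = \sum_S \sum_T kk S T U * (a S * b T).
Proof.
rewrite ffunE; apply: eq_bigr => S _; apply: eq_bigr => T _.
by rewrite /kk; case: ifP; rewrite ?mul0r // mulrA.
Qed.

Lemma emulDl n (a b c : ext n) : emul (a + b) c = emul a c + emul b c.
Proof.
apply/ffunP => U; rewrite emulE [RHS]ffunE !emulE -big_split; apply: eq_bigr => S _.
rewrite -big_split; apply: eq_bigr => T _; by rewrite !ffunE mulrDl mulrDr.
Qed.
Lemma emulDr n (a b c : ext n) : emul a (b + c) = emul a b + emul a c.
Proof.
apply/ffunP => U; rewrite emulE [RHS]ffunE !emulE -big_split; apply: eq_bigr => S _.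
rewrite -big_split; apply: eq_bigr => T _; by rewrite !ffunE mulrDr mulrDr.
Qed.
Lemma emul0l n (c : ext n) : emul 0 c = 0.
Proof.
apply/ffunP => U; rewrite emulE [RHS]ffunE big1 // => S _; rewrite big1 // => T _.
by rewrite ffunE mul0r mulr0.
Qed.
Lemma emul0r n (c : ext n) : emul c 0 = 0.
Proof.
apply/ffunP => U; rewrite emulE [RHS]ffunE big1 // => S _; rewrite big1 // => T _.
by rewrite ffunE mulr0 mulr0.
Qed.
Lemma emulZl n p (a b : ext n) : emul (cmul p a) b = cmul p (emul a b).
Proof.
apply/ffunP => U; rewrite emulE [RHS]ffunE !emulE mulr_sumr; apply: eq_bigr => S _.
rewrite mulr_sumr; apply: eq_bigr => T _; rewrite ffunE; ring.
Qed.
Lemma emulZr n p (a b : ext n) : emul a (cmul p b) = cmul p (emul a b).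
Proof.
apply/ffunP => U; rewrite emulE [RHS]ffunE !emulE mulr_sumr; apply: eq_bigr => S _.
rewrite mulr_sumr; apply: eq_bigr => T _; rewrite ffunE; ring.
Qed.
Lemma emul_suml n I (r : seq I) (P : pred I) (F : I -> ext n) c :
  emul (\sum_(i <- r | P i) F i) c = \sum_(i <- r | P i) emul (F i) c.
Proof. exact: (big_morph (fun a => emul a c) (fun a b => emulDl a b c) (emul0l c)). Qed.
Lemma emul_sumr n I (r : seq I) (P : pred I) (F : I -> ext n) c :
  emul c (\sum_(i <- r | P i) F i) = \sum_(i <- r | P i) emul c (F i).
Proof. exact: (big_morph (fun a => emul c a) (fun a b => emulDr c a b) (emul0r c)). Qed.
Lemma emul_ebE n (S T : {set 'I_n}) U : emul (eb S) (eb T) U = kk S T U.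
Proof.
rewrite emulE (bigD1 S) //=.
rewrite [X in _ + X]big1 ?addr0; last first.
  move=> S' hS; rewrite big1 // => T' _; by rewrite !ffunE (negbTE hS) mul0r mulr0.
rewrite (bigD1 T) //= [X in _ + X]big1 ?addr0; last first.
  move=> T' hT; by rewrite !ffunE (negbTE hT) mulr0 mulr0.
by rewrite !ffunE !eqxx mulr1 mulr1.
Qed.

Lemma sumU_nat n (A B : {set 'I_n}) (F : 'I_n -> nat) : A :&: B = set0 ->
  (\sum_(i in A :|: B) F i = \sum_(i in A) F i + \sum_(i in B) F i)%N.
Proof.
move=> h; have dj : [disjoint A & B] by rewrite -setI_eq0 h.
rewrite -(@bigU _ 0%N addn _ (mem A) (mem B) F dj); apply: eq_bigl => i; by rewrite !inE.
Qed.

Lemma invE n (S T : {set 'I_n}) :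
  Defs.inv S T = (\sum_(i in S) \sum_(j in T) (j < i)%N)%N.
Proof.
rewrite /Defs.inv -sum1_card pair_big /= [LHS]big_mkcond [RHS]big_mkcond.
apply: eq_bigr => p _; rewrite inE.
by case: (p.1 \in S); case: (p.2 \in T) => //=; case: ltnP.
Qed.

Lemma invUl n (S1 S2 T : {set 'I_n}) : S1 :&: S2 = set0 ->
  Defs.inv (S1 :|: S2) T = (Defs.inv S1 T + Defs.inv S2 T)%N.
Proof. by move=> h; rewrite !invE sumU_nat. Qed.

Lemma invUr n (S T1 T2 : {set 'I_n}) : T1 :&: T2 = set0 ->
  Defs.inv S (T1 :|: T2) = (Defs.inv S T1 + Defs.inv S T2)%N.
Proof.
move=> h; rewrite !invE -big_split; apply: eq_bigr => i _; by rewrite sumU_nat.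
Qed.

Lemma emul_eb n (S T : {set 'I_n}) : emul (eb S) (eb T) =
  if S :&: T == set0 then cmul ((-1) ^+ Defs.inv S T) (eb (S :|: T)) else 0.
Proof.
apply/ffunP => U; rewrite emul_ebE /kk.
case: (S :&: T == set0) => /=; last by rewrite ffunE.
rewrite !ffunE eq_sym; case: (U == S :|: T); by rewrite ?mulr1 ?mulr0.
Qed.

Lemma eb_assoc n (S T U : {set 'I_n}) :
  emul (emul (eb S) (eb T)) (eb U) = emul (eb S) (emul (eb T) (eb U)).
Proof.
rewrite !emul_eb.
case e1: (S :&: T == set0); case e3: (T :&: U == set0);
  rewrite ?emul0l ?emul0r ?emulZl ?emulZr ?emul_eb ?setIUl ?setIUr ?setU_eq0 ?e1 ?e3 /=;
  rewrite ?cmulx0 ?andbT ?andbF ?cmulx0 //.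
case e2: (S :&: U == set0); rewrite ?cmulx0 // !cmulA -!exprD setUA.
move/eqP: e1 => e1; move/eqP: e2 => e2; move/eqP: e3 => e3.
rewrite invUl // invUr //; congr (cmul ((-1) ^+ _) _); lia.
Qed.

Lemma assoc1 n (S T : {set 'I_n}) z :
  emul (emul (eb S) (eb T)) z = emul (eb S) (emul (eb T) z).
Proof.
rewrite (expand z) !emul_sumr; apply: eq_bigr => U _.
by rewrite !emulZr eb_assoc.
Qed.

Lemma assoc2 n (S : {set 'I_n}) y z :
  emul (emul (eb S) y) z = emul (eb S) (emul y z).
Proof.
rewrite (expand y) emul_sumr !emul_suml emul_sumr; apply: eq_bigr => T _.
by rewrite emulZr emulZl !emulZl emulZr assoc1.
Qed.

Lemma emulA n (x y z : ext n) : emul (emul x y) z = emul x (emul y z).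
Proof.
rewrite (expand x) !emul_suml; apply: eq_bigr => S _.
by rewrite !emulZl assoc2.
Qed.

Lemma eone_eb n : eone n = eb set0.
Proof. by []. Qed.

Lemma inv0l n (T : {set 'I_n}) : Defs.inv set0 T = 0%N.
Proof. by rewrite invE big_set0. Qed.
Lemma inv0r n (T : {set 'I_n}) : Defs.inv T set0 = 0%N.
Proof. by rewrite invE big1 // => i _; rewrite big_set0. Qed.

Lemma emul1l n (x : ext n) : emul (eone n) x = x.
Proof.
rewrite {1}(expand x) emul_sumr [RHS]expand; apply: eq_bigr => T _.
by rewrite emulZr emul_eb set0I eqxx inv0l expr0 cmul1 set0U.
Qed.
Lemma emul1r n (x : ext n) : emul x (eone n) = x.
Proof.
rewrite {1}(expand x) emul_suml [RHS]expand; apply: eq_bigr => T _.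
by rewrite emulZl emul_eb setI0 eqxx inv0r expr0 cmul1 setU0.
Qed.

Lemma inv11 n (i j : 'I_n) : Defs.inv [set i] [set j] = (j < i)%N.
Proof. by rewrite invE !big_set1. Qed.

Lemma eb1_anti n (i j : 'I_n) :
  emul (eb [set i]) (eb [set j]) = - emul (eb [set j]) (eb [set i]).
Proof.
rewrite !emul_eb; case: (i =P j) => [-> | ne].
  rewrite setIid; have -> : ([set j] == set0) = false.
    by apply/negbTE/set0Pn; exists j; rewrite inE.
  by rewrite oppr0.
have d : forall a b : 'I_n, a != b -> [set a] :&: [set b] == set0.
  move=> a b ab; apply/eqP/setP => k; rewrite !inE.
  by case: (k =P a) => // ->; rewrite (negbTE ab).
rewrite !d ?(introN eqP ne) //; last by apply/eqP => h; apply: ne.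
rewrite setUC -cmulN !inv11; congr (cmul _ _).
case: (ltngtP i j) => h //=; rewrite ?expr1 ?expr0 ?opprK //.
by case: ne; apply: val_inj.
Qed.

Definition deg1 n (x : ext n) := forall S : {set 'I_n}, #|S| != 1%N -> x S = 0.

Lemma anti n (u v : ext n) : deg1 u -> deg1 v -> emul u v = - emul v u.
Proof.
move=> du dv.
rewrite (expand u) (expand v) !emul_suml -sumrN.
under eq_bigr do rewrite emul_sumr.
under [RHS]eq_bigr do rewrite emul_sumr.
rewrite exchange_big; apply: eq_bigr => S _; rewrite -sumrN; apply: eq_bigr => T _.
rewrite !emulZl !emulZr.
case: (boolP (#|T| == 1%N)) => [/cards1P[i ->]|hT]; last first.
  by rewrite (du _ hT) !cmul0 ?cmulx0 oppr0.
case: (boolP (#|S| == 1%N)) => [/cards1P[j ->]|hS]; last first.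
  by rewrite (dv _ hS) !cmul0 ?cmulx0 oppr0.
by rewrite eb1_anti !cmulxN !cmulA mulrC.
Qed.

Lemma two_neq0 n : (2%:R : Pn n) != 0.
Proof. by rewrite -(mpolyC_nat n rat 2) mpolyC_eq0. Qed.

Lemma sqz n (u : ext n) : deg1 u -> emul u u = 0.
Proof.
move=> du; have h := anti du du.
apply/ffunP => U; rewrite [RHS]ffunE.
have : emul u u U * 2%:R = 0.
  by rewrite mulr_natr mulr2n {1}h ffunE addNr.
by move/eqP; rewrite mulf_eq0 (negbTE (two_neq0 n)) orbF => /eqP.
Qed.

Lemma deg1_ew n (j : 'I_n) : deg1 (ew j).
Proof.
move=> S hS; rewrite ffunE; case: eqP => // e; by rewrite e cards1 in hS.
Qed.
Lemma deg1D n (x y : ext n) : deg1 x -> deg1 y -> deg1 (x + y).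
Proof. by move=> dx dy S hS; rewrite ffunE dx // dy // addr0. Qed.
Lemma deg1Z n p (x : ext n) : deg1 x -> deg1 (cmul p x).
Proof. by move=> dx S hS; rewrite ffunE dx // mulr0. Qed.
Lemma deg1_sum n I (r : seq I) (P : pred I) (F : I -> ext n) :
  (forall i, P i -> deg1 (F i)) -> deg1 (\sum_(i <- r | P i) F i).
Proof.
move=> h; apply: (big_ind (@deg1 n)) => //.
- by move=> S _; rewrite ffunE.
- by move=> x y; apply: deg1D.
Qed.

Definition ltO n : rel 'I_n := fun x y => (x < y)%N.

Lemma sorted_enumS n (A : {set 'I_n}) : sorted (@ltO n) (enum A).
Proof.
have : sorted ltn (map val (enum A)).
  rewrite -[enum _](eq_filter (mem_enum _)).
  rewrite -(eq_filter (mem_map val_inj _)) -filter_map.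
  by rewrite (sorted_filter ltn_trans) // unlock val_ord_enum iota_ltn_sorted.
by rewrite sorted_map.
Qed.

Lemma enum_cons n (m : 'I_n) (S : {set 'I_n}) :
  m \notin S -> (forall j, j \in S -> (m < j)%N) -> enum (m |: S) = m :: enum S.
Proof.
move=> mS hm.
have tr : transitive (@ltO n) by move=> x y z; apply: ltn_trans.
apply: (irr_sorted_eq tr) => //.
- by move=> x; rewrite /ltO ltnn.
- exact: sorted_enumS.
- rewrite /= path_sortedE // sorted_enumS andbT.
  by apply/allP => j; rewrite mem_enum => /hm.
- by move=> x; rewrite mem_enum !inE mem_enum.
Qed.

Lemma set_min_ind n (P : {set 'I_n} -> Prop) : P set0 ->
  (forall (m : 'I_n) (S : {set 'I_n}), m \notin S -> (forall j, j \in S -> (m < j)%N) -> P S -> P (m |: S)) ->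
  forall S, P S.
Proof.
move=> H0 Hs S; have [k hk] : exists k, #|S| = k by eexists.
elim: k S hk => [|k IH] S hS.
  by move/eqP: hS; rewrite cards_eq0 => /eqP ->.
have : #|S| != 0%N by rewrite hS.
rewrite cards_eq0 => /set0Pn[i0 i0S].
case: (arg_minnP (fun i : 'I_n => val i) i0S) => m mS mmin.
rewrite -(setD1K mS); apply: Hs.
- by rewrite setD11.
- move=> j; rewrite !inE => /andP[jm jS].
  rewrite ltn_neqAle mmin // andbT; apply/eqP => e.
  by move: jm; rewrite (val_inj e) eqxx.
- have mS' : m \in S := mS.
  by apply: IH; move: hS; rewrite (cardsD1 m S) mS' add1n => -[].
Qed.

Definition VS n (v : 'I_n -> ext n) (S : {set 'I_n}) : ext n :=
  wprod [seq v j | j <- enum S].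

Lemma VS0 n (v : 'I_n -> ext n) : VS v set0 = eone n.
Proof. by rewrite /VS enum_set0. Qed.

Lemma VS_cons n (v : 'I_n -> ext n) (m : 'I_n) (S : {set 'I_n}) :
  m \notin S -> (forall j, j \in S -> (m < j)%N) ->
  VS v (m |: S) = emul (v m) (VS v S).
Proof. by move=> h1 h2; rewrite /VS enum_cons. Qed.

Lemma VS1 n (v : 'I_n -> ext n) (m : 'I_n) : VS v [set m] = v m.
Proof. by rewrite /VS enum_set1 /= emul1r. Qed.

Definition cntl n (S : {set 'I_n}) (i : 'I_n) := #|[set j in S | (j < i)%N]|.

Lemma cntl0 n (i : 'I_n) : cntl set0 i = 0%N.
Proof. by apply: eq_card0 => j; rewrite !inE. Qed.

Lemma cntl_small n (S : {set 'I_n}) (i : 'I_n) :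
  (forall j, j \in S -> (i < j)%N) -> cntl S i = 0%N.
Proof.
move=> h; apply: eq_card0 => j; rewrite !inE.
case jS: (j \in S) => //=; by rewrite ltnNge ltnW // h.
Qed.

Lemma cntlU1 n (S : {set 'I_n}) (i m : 'I_n) : m \notin S -> (m < i)%N ->
  cntl (m |: S) i = (cntl S i).+1.
Proof.
move=> mS mi; rewrite /cntl.
have -> : [set j in m |: S | (j < i)%N] = m |: [set j in S | (j < i)%N].
  apply/setP => j; rewrite !inE; case: (j =P m) => [->|] //=; by rewrite mi.
by rewrite cardsU1 inE (negbTE mS).
Qed.

Lemma emulNl n (a b : ext n) : emul (- a) b = - emul a b.
Proof. by apply/eqP; rewrite -addr_eq0 -emulDl addNr emul0l. Qed.
Lemma emulNr n (a b : ext n) : emul a (- b) = - emul a b.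
Proof. by apply/eqP; rewrite -addr_eq0 -emulDr addNr emul0r. Qed.

Lemma L1 n (v : 'I_n -> ext n) : (forall i, deg1 (v i)) -> forall i S,
  emul (v i) (VS v S) =
  if i \in S then 0 else cmul ((-1) ^+ cntl S i) (VS v (i |: S)).
Proof.
move=> dv i; apply: set_min_ind.
  by rewrite VS0 emul1r inE cntl0 expr0 cmul1 setU0 VS1.
move=> m S mS hm IH.
rewrite VS_cons //.
case: (ltngtP i m) => h.
- have iS : i \notin m |: S.
    rewrite !inE negb_or; apply/andP; split.
      by apply/eqP => e; move: h; rewrite e ltnn.
    by apply/negP => /hm; rewrite ltnNge ltnW.
  rewrite (negbTE iS) cntl_small; last first.
    move=> j; rewrite !inE => /orP[/eqP -> //|/hm]; by apply: ltn_trans.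
  rewrite expr0 cmul1 (VS_cons _ iS); first by rewrite (VS_cons _ mS hm).
  move=> j; rewrite !inE => /orP[/eqP -> //|/hm]; by apply: ltn_trans.
- rewrite -emulA (anti (dv i) (dv m)) emulNl emulA IH !inE.
  have mi : (m == i) = false by apply/eqP => e; move: h; rewrite e ltnn.
  have im : (i == m) = false by rewrite eq_sym.
  rewrite im /=.
  case iS: (i \in S); first by rewrite emul0r oppr0.
  rewrite emulZr -VS_cons; last first.
  + move=> j; rewrite !inE => /orP[/eqP -> //|/hm //].
  + by rewrite !inE mi.
  rewrite setUCA cntlU1 // exprS mulN1r cmulN //.
- have e : i = m by apply: val_inj.
  subst i; rewrite -emulA sqz // emul0l setU11 //.
Qed.

Lemma inv1l n (m : 'I_n) (T : {set 'I_n}) : Defs.inv [set m] T = cntl T m.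
Proof.
rewrite invE big_set1 /cntl -sum1_card [RHS]big_mkcond [LHS]big_mkcond /=.
apply: eq_bigr => j _; rewrite !inE; case: (j \in T) => //=; by case: ltnP.
Qed.

Lemma L2 n (v : 'I_n -> ext n) : (forall i, deg1 (v i)) -> forall S T,
  emul (VS v S) (VS v T) =
  if S :&: T == set0 then cmul ((-1) ^+ Defs.inv S T) (VS v (S :|: T)) else 0.
Proof.
move=> dv S T; elim/set_min_ind: S.
  by rewrite VS0 emul1l set0I eqxx inv0l expr0 cmul1 set0U.
move=> m S mS hm IH.
rewrite VS_cons // emulA IH setIUl setU_eq0.
case: (S :&: T =P set0) => [e|]; last by rewrite andbF emul0r.
rewrite andbT emulZr (L1 dv) !inE (negbTE mS) /= setI_eq0 disjoints1.
case mT: (m \in T); first by rewrite cmulx0.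
rewrite cmulA -exprD setUA invUl; last first.
  by apply/setP => j; rewrite !inE; case: (j =P m) => // ->; rewrite (negbTE mS).
rewrite inv1l.
have -> : cntl (S :|: T) m = cntl T m.
  apply: eq_card => j; rewrite !inE; case jS: (j \in S) => //=.
  by rewrite ltnNge ltnW ?andbF // hm.
by rewrite addnC.
Qed.

Lemma esubstD n s sw (a b : ext n) : esubst s sw (a + b) = esubst s sw a + esubst s sw b.
Proof.
rewrite /esubst -big_split; apply: eq_bigr => S _; by rewrite ffunE msymD cmulD.
Qed.
Lemma esubst0 n s sw : esubst s sw (0 : ext n) = 0.
Proof. by rewrite /esubst big1 // => S _; rewrite ffunE msym0 cmul0. Qed.
Lemma esubstZ n s sw p (a : ext n) :
  esubst s sw (cmul p a) = cmul (msym s p) (esubst s sw a).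
Proof.
rewrite /esubst cmul_sumx; apply: eq_bigr => S _; by rewrite ffunE msymM cmulA.
Qed.
Lemma esubst_sum n s sw I (r : seq I) (P : pred I) (F : I -> ext n) :
  esubst s sw (\sum_(i <- r | P i) F i) = \sum_(i <- r | P i) esubst s sw (F i).
Proof. exact: (big_morph (esubst s sw) (esubstD s sw) (esubst0 s sw)). Qed.
Lemma esubst_eb n s sw (T : {set 'I_n}) : esubst s sw (eb T) = VS sw T.
Proof.
rewrite /esubst (bigD1 T) //= big1 ?addr0.
  by rewrite ffunE eqxx msym1 cmul1.
by move=> S hS; rewrite ffunE (negbTE hS) msym0 cmul0.
Qed.
Lemma esubst_ew n s sw (j : 'I_n) : esubst s sw (ew j) = sw j.
Proof. by rewrite -[ew j]/(eb [set j]) esubst_eb VS1. Qed.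
Lemma esubst_eone n s sw : esubst s sw (eone n) = eone n.
Proof. by rewrite eone_eb esubst_eb VS0. Qed.

Lemma msym_sign n s k : msym s ((-1) ^+ k : Pn n) = (-1) ^+ k.
Proof. by rewrite rmorphXn rmorphN1. Qed.

Lemma esubstM n s (sw : 'I_n -> ext n) : (forall i, deg1 (sw i)) -> forall x y,
  esubst s sw (emul x y) = emul (esubst s sw x) (esubst s sw y).
Proof.
move=> dsw x y.
rewrite [in LHS](expand x) [in LHS](expand y) emul_suml esubst_sum.
rewrite [in RHS]/esubst emul_suml; apply: eq_bigr => S _.
rewrite emul_sumr esubst_sum emul_sumr; apply: eq_bigr => T _.
rewrite emulZl emulZr esubstZ esubstZ emulZl emulZr (L2 dsw) emul_eb.
case: ifP => _; last by rewrite esubst0 !cmulx0.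
by rewrite esubstZ esubst_eb msym_sign.
Qed.

Lemma esubst_wprod n s (sw : 'I_n -> ext n) : (forall i, deg1 (sw i)) -> forall l,
  esubst s sw (wprod l) = wprod (map (esubst s sw) l).
Proof.
move=> dsw; elim => [|a l IH] /=; first exact: esubst_eone.
by rewrite (esubstM _ dsw) IH.
Qed.

Definition wgt n (S : {set 'I_n}) : nat := (\sum_(i in S) (i : nat))%N.

Definition upper n (x : ext n) (S : {set 'I_n}) :=
  x S = 1 /\ forall T, x T != 0 -> T = S \/ (wgt S < wgt T)%N.

Lemma wgtU n (S T : {set 'I_n}) : S :&: T = set0 -> wgt (S :|: T) = (wgt S + wgt T)%N.
Proof. exact: sumU_nat. Qed.

Lemma kk_ne0 n (S T U : {set 'I_n}) : kk S T U != 0 -> S :&: T = set0 /\ U = S :|: T.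
Proof.
rewrite /kk; case: (S :&: T =P set0) => [e|_]; last by rewrite eqxx.
by case: (S :|: T =P U) => [e'|_] //=; rewrite eqxx.
Qed.

Lemma UPmul n (x y : ext n) S T : upper x S -> upper y T -> S :&: T = set0 ->
  emul x y (S :|: T) = (-1) ^+ Defs.inv S T /\
  forall U, emul x y U != 0 -> U = S :|: T \/ (wgt (S :|: T) < wgt U)%N.
Proof.
move=> [xS ux] [yT uy] dST.
have K : forall S' T' U, kk S' T' U * (x S' * y T') != 0 ->
    ((S' == S) && (T' == T) && (U == S :|: T)) || (wgt (S :|: T) < wgt U)%N.
  move=> S' T' U; rewrite !mulf_eq0 !negb_or => /and3P[hk hx hy].
  have [d' eU] := kk_ne0 hk.
  rewrite eU (wgtU dST) (wgtU d').
  case: (ux _ hx) => [eS|lS]; case: (uy _ hy) => [eT|lT].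
  - by rewrite eS eT !eqxx.
  - by apply/orP; right; rewrite eS; lia.
  - by apply/orP; right; rewrite eT; lia.
  - by apply/orP; right; lia.
split.
  rewrite emulE (bigD1 S) //= [X in _ + X]big1 ?addr0; last first.
    move=> S' hS'; apply: big1 => T' _; apply/eqP; apply: contraTT isT => h.
    have := K _ _ _ h; rewrite (negbTE hS') /= ltnn; done.
  rewrite (bigD1 T) //= [X in _ + X]big1 ?addr0; last first.
    move=> T' hT'; apply/eqP; apply: contraTT isT => h.
    have := K _ _ _ h; rewrite (negbTE hT') andbF /= ltnn; done.
  by rewrite xS yT !mulr1 /kk dST !eqxx.
move=> U hU.
case/boolP: ((U == S :|: T) || (wgt (S :|: T) < wgt U)%N).
  by case/orP => [/eqP|] ; [left|right].
move=> hP; exfalso; move/negP: hU; apply; rewrite emulE; apply/eqP.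
apply: big1 => S' _; apply: big1 => T' _; apply/eqP; apply: contraNT hP => h.
by case/orP: (K _ _ _ h) => [/andP[_ ->]|->] //; rewrite orbT.
Qed.

Lemma set1_eqE n (i j : 'I_n) : ([set i] == [set j]) = (i == j).
Proof.
apply/eqP/eqP => [e|->] //; have : i \in [set j] by rewrite -e set11.
by rewrite inE => /eqP.
Qed.

Lemma wgt1 n (i : 'I_n) : wgt [set i] = i.
Proof. by rewrite /wgt big_set1. Qed.

Lemma tri_deg1 n (wt : 'I_n -> ext n) : triangular_form wt -> forall i, deg1 (wt i).
Proof.
move=> [F hF] i; rewrite hF; apply: deg1D; first exact: deg1_ew.
by apply: deg1_sum => j _; apply/deg1Z/deg1_ew.
Qed.

Lemma tri_upper n (wt : 'I_n -> ext n) : triangular_form wt -> forall i, upper (wt i) [set i].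
Proof.
move=> [F hF] i; rewrite hF; split.
  rewrite ffunE sum_ffunE big1 ?addr0; first by rewrite ffunE eqxx.
  move=> j ij; rewrite !ffunE set1_eqE.
  have -> : (i == j) = false by apply/eqP => e; move: ij; rewrite e ltnn.
  by rewrite mulr0.
move=> T; rewrite ffunE sum_ffunE ffunE => h.
case: (T =P [set i]) => [->|nT]; [by left | right].
move: h; rewrite (introF eqP nT) add0r => h.
case/boolP: [exists j : 'I_n, (i < j)%N && (T == [set j])].
  by case/existsP => j /andP[ij /eqP ->]; rewrite !wgt1.
move=> hn; exfalso; move/negP: h; apply; apply/eqP; apply: big1 => j ij.
rewrite !ffunE; case: (T =P [set j]) => [e|]; last by rewrite mulr0.
by move: hn; rewrite negb_exists => /forallP/(_ j); rewrite ij e eqxx.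
Qed.

Lemma VS_upper n (wt : 'I_n -> ext n) : triangular_form wt -> forall S, upper (VS wt S) S.
Proof.
move=> tw; elim/set_min_ind.
  rewrite VS0; split; first by rewrite ffunE eqxx.
  move=> T; rewrite ffunE; case: (T =P set0) => [->|]; [by left | by rewrite eqxx].
move=> m S mS hm IH; rewrite VS_cons //.
have d : [set m] :&: S = set0.
  by apply/setP => j; rewrite !inE; case: (j =P m) => // ->; rewrite (negbTE mS).
have [h1 h2] := UPmul (tri_upper tw m) IH d.
split; first by rewrite h1 inv1l cntl_small.
exact: h2.
Qed.

Lemma coef0 n (wt : 'I_n -> ext n) : triangular_form wt ->
  forall c : {set 'I_n} -> Pn n,
  \sum_S cmul (c S) (VS wt S) = 0 -> forall S, c S = 0.
Proof.
move=> tw c h S; have [k hk] : exists k, (wgt S <= k)%N by exists (wgt S).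
elim: k S hk => [|k IH] S hS.
- have := congr1 (fun f : ext n => f S) h; rewrite sum_ffunE ffunE.
  rewrite (bigD1 S) //= big1 ?addr0.
    by rewrite ffunE (proj1 (VS_upper tw S)) mulr1.
  move=> T hT; rewrite ffunE; case: (boolP (VS wt T S != 0)) => [hne|].
    case: ((proj2 (VS_upper tw T)) S hne) => [e|lt]; first by move: hT; rewrite e eqxx.
    by move: lt; rewrite (leqNgt) ; move: hS; rewrite leqn0 => /eqP ->.
  by rewrite negbK => /eqP ->; rewrite mulr0.
- have := congr1 (fun f : ext n => f S) h; rewrite sum_ffunE ffunE.
  rewrite (bigD1 S) //= big1 ?addr0.
    by rewrite ffunE (proj1 (VS_upper tw S)) mulr1.
  move=> T hT; rewrite ffunE; case: (boolP (VS wt T S != 0)) => [hne|].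
    case: ((proj2 (VS_upper tw T)) S hne) => [e|lt]; first by move: hT; rewrite e eqxx.
    by rewrite IH ?mul0r //; rewrite -ltnS; apply: leq_trans hS.
  by rewrite negbK => /eqP ->; rewrite mulr0.
Qed.

Lemma coef_uniq n (wt : 'I_n -> ext n) : triangular_form wt ->
  forall c d : {set 'I_n} -> Pn n,
  \sum_S cmul (c S) (VS wt S) = \sum_S cmul (d S) (VS wt S) -> forall S, c S = d S.
Proof.
move=> tw c d h S; apply/eqP; rewrite -subr_eq0; apply/eqP.
apply: (coef0 tw (c := fun S => c S - d S)) => //.
under eq_bigr do rewrite cmulD cmulN.
by rewrite big_split /= sumrN h subrr.
Qed.

Definition inspan n (wt : 'I_n -> ext n) (y : ext n) :=
  exists c : {set 'I_n} -> Pn n, y = \sum_S cmul (c S) (VS wt S).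

Lemma inspanD n (wt : 'I_n -> ext n) y z : inspan wt y -> inspan wt z -> inspan wt (y + z).
Proof.
move=> [c ->] [d ->]; exists (fun S => c S + d S).
by rewrite -big_split; apply: eq_bigr => S _; rewrite cmulD.
Qed.
Lemma inspanZ n (wt : 'I_n -> ext n) p y : inspan wt y -> inspan wt (cmul p y).
Proof.
move=> [c ->]; exists (fun S => p * c S).
by rewrite cmul_sumx; apply: eq_bigr => S _; rewrite cmulA.
Qed.
Lemma inspan0 n (wt : 'I_n -> ext n) : inspan wt 0.
Proof. by exists (fun _ => 0); rewrite big1 // => S _; rewrite cmul0. Qed.
Lemma inspanVS n (wt : 'I_n -> ext n) T : inspan wt (VS wt T).
Proof.
exists (fun S => (S == T)%:R); rewrite (bigD1 T) //= eqxx cmul1 big1 ?addr0 //.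
by move=> S /negbTE ->; rewrite cmul0.
Qed.
Lemma inspan_sum n (wt : 'I_n -> ext n) I (r : seq I) (P : pred I) (F : I -> ext n) :
  (forall i, P i -> inspan wt (F i)) -> inspan wt (\sum_(i <- r | P i) F i).
Proof.
move=> h; apply: (big_ind (inspan wt)) => //; [exact: inspan0 | exact: inspanD].
Qed.

Lemma wgt_le n (S : {set 'I_n}) : (wgt S <= \sum_(i < n) (i : nat))%N.
Proof.
rewrite /wgt big_mkcond /=; apply: leq_sum => i _; by case: (i \in S).
Qed.

Lemma inspan_all n (wt : 'I_n -> ext n) : triangular_form wt -> forall y, inspan wt y.
Proof.
move=> tw.
have step : forall S, (forall T, (wgt S < wgt T)%N -> inspan wt (eb T)) -> inspan wt (eb S).
  move=> S IH.
  have e : eb S = VS wt S + cmul (-1) (\sum_(T | T != S) cmul (VS wt S T) (eb T)).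
    have ex : VS wt S = eb S + \sum_(T | T != S) cmul (VS wt S T) (eb T).
      by rewrite {1}(expand (VS wt S)) (bigD1 S) //= (proj1 (VS_upper tw S)) cmul1.
    by rewrite {1}ex cmulN cmul1 addrK.
  rewrite e; apply: inspanD; first exact: inspanVS.
  apply/inspanZ/inspan_sum => T hT.
  case: (boolP (VS wt S T != 0)) => [hne|].
    case: ((proj2 (VS_upper tw S)) T hne) => [eT|lt]; first by move: hT; rewrite eT eqxx.
    by apply/inspanZ/IH.
  by rewrite negbK => /eqP ->; rewrite cmul0; exact: inspan0.
set B := (\sum_(i < n) (i : nat))%N.
have hb : forall k S, (B - wgt S <= k)%N -> inspan wt (eb S).
  elim => [|k IH] S hS; apply: step => T hT.
    have := wgt_le T; have := wgt_le S; rewrite -/B => h1 h2; exfalso.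
    move: hS; rewrite leqn0 subn_eq0 => h3; lia.
  apply: IH; have := wgt_le T; have := wgt_le S; rewrite -/B => h1 h2; lia.
move=> y; rewrite (expand y); apply: inspan_sum => S _; apply: inspanZ.
exact: (hb (B - wgt S)%N).
Qed.

Lemma sym_from_adj n (p : Pn n) :
  (forall a b : 'I_n, val b = (val a).+1 -> msym (tperm a b) p = p) -> p \is symmetric.
Proof.
move=> h.
have GM : forall s1 s2 : 'S_n, msym s1 p = p -> msym s2 p = p -> msym (s1 * s2)%g p = p.
  by move=> s1 s2 h1 h2; rewrite msymMm h1 h2.
have Gt : forall d (i j : 'I_n), val j = (i + d.+1)%N -> msym (tperm i j) p = p.
  elim => [|d IH] i j hj; first by apply: h; rewrite hj addn1.
  have hj' : nat_of_ord j = (i + d.+2)%N := hj.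
  have kn : (i + d.+1 < n)%N by have := ltn_ord j; lia.
  pose k := Ordinal kn.
  have ik : i != k by apply/eqP => e; have := congr1 val e; rewrite /=; lia.
  have jk : j != k by apply/eqP => e; have := congr1 val e; rewrite /=; lia.
  have ij : i != j by apply/eqP => e; have := congr1 val e; rewrite /=; lia.
  have -> : tperm i j = (tperm i k ^ tperm k j)%g.
    by rewrite tpermJ tpermD 1?eq_sym // tpermL.
  have hkj : msym (tperm k j) p = p by apply: h; rewrite /=; lia.
  rewrite /conjg; apply: (GM); first by rewrite tpermV.
  by apply: (GM) => //; apply: (IH i k).
have Ga : forall i j : 'I_n, msym (tperm i j) p = p.
  move=> i j; case: (ltngtP i j) => hij.
  - by apply: (Gt (j - i.+1)%N); rewrite /=; lia.
  - rewrite tpermC; by apply: (Gt (i - j.+1)%N); rewrite /=; lia.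
  - by rewrite (val_inj hij) tperm1 msym1m.
apply/issymP => s; case: (prod_tpermP s) => ts -> _.
elim: ts => [|t ts IH]; first by rewrite big_nil msym1m.
by rewrite big_cons; apply: (GM).
Qed.

Definition ssw n (a b : 'I_n) : 'I_n -> ext n :=
  fun j => if j == a then ew a + cmul ('X_a - 'X_b) (ew b) else ew j.

Lemma ssw_deg1 n (a b : 'I_n) j : deg1 (ssw a b j).
Proof.
rewrite /ssw; case: (j == a); last exact: deg1_ew.
by apply: deg1D; [exact: deg1_ew | apply/deg1Z/deg1_ew].
Qed.

Lemma simple_actE n (a b : 'I_n) f : simple_act a b f = esubst (tperm a b) (ssw a b) f.
Proof. by []. Qed.

Lemma mm_esubst n (wt : 'I_n -> ext n) f : mult_map wt f = esubst 1 wt f.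
Proof. by rewrite /mult_map /esubst; apply: eq_bigr => S _; rewrite msym1m. Qed.

Lemma act_span n (wt : 'I_n -> ext n) (a b : 'I_n) :
  (forall i, simple_act a b (wt i) = wt i) ->
  forall c : {set 'I_n} -> Pn n,
  simple_act a b (\sum_S cmul (c S) (VS wt S)) =
  \sum_S cmul (msym (tperm a b) (c S)) (VS wt S).
Proof.
move=> hw c; rewrite simple_actE esubst_sum; apply: eq_bigr => S _.
rewrite esubstZ /VS (esubst_wprod _ (ssw_deg1 a b)) -map_comp.
congr (cmul _ (wprod _)); apply: eq_map => j /=; by rewrite -simple_actE hw.
Qed.

Lemma part3 n (wt : 'I_n -> ext n) :
      triangular_form wt -> (forall i, ext_sym (wt i)) ->
      [/\ mult_map wt (eone n) = eone n,
          (forall f g, symcoef f -> symcoef g ->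
             mult_map wt (f + g) = mult_map wt f + mult_map wt g),
          (forall f g, symcoef f -> symcoef g ->
             mult_map wt (emul f g) = emul (mult_map wt f) (mult_map wt g)),
          (forall f, symcoef f -> ext_sym (mult_map wt f)) &
          (forall f g, symcoef f -> symcoef g ->
             mult_map wt f = mult_map wt g -> f = g) /\
          (forall y, ext_sym y -> (exists2 f, symcoef f & mult_map wt f = y))].
Proof.
move=> tw sw; have dw := tri_deg1 tw.
split.
- by rewrite mm_esubst esubst_eone.
- by move=> f g _ _; rewrite !mm_esubst esubstD.
- by move=> f g _ _; rewrite !mm_esubst (esubstM _ dw).
- move=> f sf a b hab; rewrite /mult_map act_span; last by move=> i; apply: sw.
  apply: eq_bigr => S _; congr (cmul _ _); exact/issymP.
split.
- move=> f g _ _ h; apply/ffunP => S; exact: (coef_uniq tw h).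
move=> y sy; have [c hc] := inspan_all tw y.
exists [ffun S => c S]; last first.
  by rewrite /mult_map hc; apply: eq_bigr => S _; rewrite ffunE.
move=> S; rewrite ffunE; apply: sym_from_adj => a b hab.
apply: (coef_uniq tw (c := fun S => msym (tperm a b) (c S)) (d := c)).
by rewrite -act_span; [rewrite -hc; exact: sy | move=> i; apply: sw].
Qed.

Lemma msymX1 n (s : 'S_n) (i : 'I_n) : msym s ('X_i : Pn n) = 'X_(s i).
Proof.
rewrite msymX; congr 'X_[_]; apply/mnmP => j; rewrite !mnmE.
by rewrite (canF_eq (permK s)).
Qed.

Definition xv n (l : nat) : Pn n := if insub l is Some o then 'X_o else 0.

Lemma xvE n (o : 'I_n) : xv n o = 'X_o.
Proof. by rewrite /xv valK. Qed.

Lemma msym_xv_fix n (a b : 'I_n) (l : nat) : l != a -> l != b ->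
  msym (tperm a b) (xv n l) = xv n l.
Proof.
rewrite /xv; case: insubP => [o _ vo|_] la lb; last by rewrite msym0.
rewrite msymX1 tpermD //; apply/eqP => e.
  by move: la; rewrite -vo -e eqxx.
by move: lb; rewrite -vo -e eqxx.
Qed.

Fixpoint ee n (m j : nat) {struct j} : Pn n :=
  match j with
  | 0 => (m == 0%N)%:R
  | j'.+1 => match m with 0 => 1 | m'.+1 => ee n m j' + xv n j' * ee n m' j' end
  end.

Lemma eeS n m j : ee n m.+1 j.+1 = ee n m.+1 j + xv n j * ee n m j.
Proof. by []. Qed.

Lemma ee0 n j : ee n 0 j = 1.
Proof. by case: j. Qed.

Lemma ee_low n (a b : 'I_n) : forall j m, (j <= a)%N -> val b = (val a).+1 ->
  msym (tperm a b) (ee n m j) = ee n m j.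
Proof.
elim => [|j IH] m ja hb /=; first by rewrite rmorph_nat.
case: m => [|m]; first by rewrite msym1.
rewrite msymD msymM !IH ?(ltnW ja) // msym_xv_fix //.
  by apply/eqP => e; move: ja; rewrite e ltnn.
by apply/eqP => e; move: ja; rewrite e hb ltnNge leqnSn.
Qed.

Lemma ee_high n (a b : 'I_n) : val b = (val a).+1 -> forall d m,
  msym (tperm a b) (ee n m (a.+2 + d)) = ee n m (a.+2 + d).
Proof.
move=> hb; have xa : xv n a = 'X_a by rewrite xvE.
have xb : xv n a.+1 = 'X_b by rewrite -hb xvE.
have ma : msym (tperm a b) ('X_a : Pn n) = 'X_b by rewrite msymX1 tpermL.
have mb : msym (tperm a b) ('X_b : Pn n) = 'X_a by rewrite msymX1 tpermR.
have lo := fun m => @ee_low n a b a m (leqnn a) hb.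
elim => [|d IH] m.
  rewrite addn0; case: m => [|m]; first by rewrite ee0 msym1.
  case: m => [|m] /=.
    rewrite !ee0 !msymD !msymM lo msym1 xa xb ma mb.
    by rewrite !mulr1 addrAC.
  set A2 := ee n m.+2 a. set A1 := ee n m.+1 a. set A0 := ee n m a.
  rewrite !msymD !msymM /A2 /A1 /A0 !lo xa xb ma mb.
  rewrite msymD msymM !lo ma; ring.
rewrite addnS; case: m => [|m]; first by rewrite ee0 msym1.
rewrite eeS msymD msymM !IH msym_xv_fix //; apply/eqP => e.
  by move: e => /eqP; rewrite eqn_leq leqNgt !addSn !ltnS (leqW (leq_addr d a)).
by move: e => /eqP; rewrite hb eqn_leq leqNgt !addSn !ltnS (leq_addr d a).
Qed.

Definition lin n (al : 'I_n -> Pn n) : ext n := \sum_j cmul (al j) (ew j).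

Lemma ssw_eq n (a b j : 'I_n) :
  ssw a b j = ew j + cmul ((j == a)%:R * ('X_a - 'X_b)) (ew b).
Proof.
rewrite /ssw; case: (j =P a) => [->|_]; first by rewrite mul1r.
by rewrite mul0r cmul0 addr0.
Qed.

Lemma sum_delta_ext n (b : 'I_n) (F : 'I_n -> ext n) (K : Pn n) :
  \sum_j cmul ((j == b)%:R * K) (F j) = cmul K (F b).
Proof.
rewrite (bigD1 b) //= eqxx mul1r big1 ?addr0 //.
by move=> j /negbTE ->; rewrite mul0r cmul0.
Qed.

Lemma act_lin n (a b : 'I_n) al :
  simple_act a b (lin al) =
  lin (fun j => msym (tperm a b) (al j) +
                (j == b)%:R * (msym (tperm a b) (al a) * ('X_a - 'X_b))).
Proof.
rewrite simple_actE /lin esubst_sum.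
under eq_bigr do rewrite esubstZ esubst_ew ssw_eq cmulxD.
under [RHS]eq_bigr do rewrite cmulD.
rewrite !big_split /=; congr (_ + _).
rewrite sum_delta_ext.
under eq_bigr do rewrite cmulA.
rewrite -cmul_sum; congr (cmul _ _).
rewrite (bigD1 a) //= eqxx big1 ?addr0; first by rewrite mul1r.
by move=> j /negbTE ->; rewrite mul0r mulr0.
Qed.

Definition Ec n (i j : 'I_n) : Pn n := if (i <= j)%N then ee n (j - i) j else 0.
Definition wt0 n (i : 'I_n) : ext n := lin (Ec i).

Lemma wt0_tri n : triangular_form (@wt0 n).
Proof.
exists (@Ec n) => i; rewrite /wt0 /lin (bigD1 i) //=.
rewrite /Ec leqnn subnn ee0 cmul1; congr (_ + _).
rewrite (bigID (fun j : 'I_n => (i < j)%N)) /= [X in _ + X]big1 ?addr0.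
  by apply: eq_bigl => j; case: (j =P i) => [->|]; rewrite ?ltnn ?andbT.
move=> j /andP[jni]; rewrite -leqNgt => ji.
case: (leqP i j) => ij; last by rewrite cmul0.
exfalso; move/negP: jni; apply; apply/eqP/val_inj/eqP; rewrite eqn_leq ji ij.
done.
Qed.

Lemma Ec_fix n (i j a b : 'I_n) : val b = (val a).+1 -> j != b ->
  msym (tperm a b) (Ec i j) = Ec i j.
Proof.
move=> hb jb; rewrite /Ec; case: (leqP i j) => ij; last by rewrite msym0.
case: (leqP j a) => ja; first exact: ee_low.
have jb' : (val j != (val a).+1) by rewrite -hb; apply: contra jb => /eqP/val_inj ->.
have ja2 : ((val a).+2 <= val j)%N by rewrite ltn_neqAle eq_sym jb' ja.
by rewrite -(subnKC ja2) ee_high.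
Qed.

Lemma wt0_sym n (i : 'I_n) : ext_sym (wt0 i).
Proof.
move=> a b hb; rewrite /wt0 act_lin /lin; apply: eq_bigr => j _; congr (cmul _ _).
case: (j =P b) => [->|/eqP jb]; last by rewrite mul0r addr0 Ec_fix.
rewrite mul1r /Ec hb.
have xa : xv n a = 'X_a by rewrite xvE.
have ma : msym (tperm a b) ('X_a : Pn n) = 'X_b by rewrite msymX1 tpermL.
case: (leqP i a) => ia.
  rewrite (leqW ia) subSn // eeS msymD msymM !ee_low // xa ma; ring.
case: (leqP i a.+1) => ia1; last by rewrite msym0 mul0r addr0.
have -> : (a.+1 - i = 0)%N by apply/eqP; rewrite subn_eq0.
by rewrite ee0 msym1 msym0 !mul0r addr0.
Qed.

Lemma card_sets n : #|{set 'I_n}| = (2 ^ n)%N.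
Proof. by rewrite -cardsT -powersetT card_powerset cardsT card_ord. Qed.

Lemma eb_sym n (T : {set 'I_n}) : symcoef (eb T).
Proof. by move=> S; rewrite ffunE rpred_nat. Qed.

Lemma mm_eb n (wt : 'I_n -> ext n) T : mult_map wt (eb T) = VS wt T.
Proof.
rewrite /mult_map (bigD1 T) //= ffunE eqxx cmul1 big1 ?addr0 //.
by move=> S /negbTE hS; rewrite ffunE hS cmul0.
Qed.

Theorem theorem3p1 (n : nat) :
  (* Lambda^w_n is a free Lambda_n-module of rank 2^n *)
  (exists B : 'I_(2 ^ n) -> ext n,
      (forall k, ext_sym (B k)) /\
      (forall x : ext n, ext_sym x ->
         exists! c : {ffun 'I_(2 ^ n) -> {mpoly rat[n]}},
           (forall k, c k \is symmetric) /\
           x = \sum_(k < 2 ^ n) cmul (c k) (B k)))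
  /\
  (* elements of the required form exist *)
  (exists wt : 'I_n -> ext n, triangular_form wt /\ forall i, ext_sym (wt i))
  /\
  (* for any such elements, multiplication is a ring isomorphism
     Lambda_n (x) /\[wt_1..wt_n] ~= Lambda^w_n *)
  (forall wt : 'I_n -> ext n,
      triangular_form wt -> (forall i, ext_sym (wt i)) ->
      [/\ mult_map wt (eone n) = eone n,
          (forall f g, symcoef f -> symcoef g ->
             mult_map wt (f + g) = mult_map wt f + mult_map wt g),
          (forall f g, symcoef f -> symcoef g ->
             mult_map wt (emul f g) = emul (mult_map wt f) (mult_map wt g)),
          (forall f, symcoef f -> ext_sym (mult_map wt f)) &
          (forall f g, symcoef f -> symcoef g ->
             mult_map wt f = mult_map wt g -> f = g) /\
          (forall y, ext_sym y -> (exists2 f, symcoef f & mult_map wt f = y))]).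
Proof.
have tw := @wt0_tri n; have sw := @wt0_sym n.
split; last by split; [exists (@wt0 n) | exact: part3].
have [m1 m2 m3 m4 [m5 m6]] := part3 tw sw.
pose g (k : 'I_(2 ^ n)) : {set 'I_n} := enum_val (cast_ord (esym (card_sets n)) k).
pose h (S : {set 'I_n}) : 'I_(2 ^ n) := cast_ord (card_sets n) (enum_rank S).
have gh : cancel h g by move=> S; rewrite /g /h cast_ordK enum_rankK.
have hg : cancel g h by move=> k; rewrite /g /h enum_valK cast_ordKV.
have reidx : forall F : {set 'I_n} -> ext n,
    \sum_(k < 2 ^ n) F (g k) = \sum_S F S.
  move=> F; rewrite [RHS](reindex g) //; exists h => ? _; [exact: hg | exact: gh].
exists (fun k => VS (@wt0 n) (g k)); split.
  by move=> k; rewrite -mm_eb; apply/m4/eb_sym.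
move=> x sx; have [f sf hf] := m6 x sx.
exists [ffun k => f (g k)]; split.
  split; first by move=> k; rewrite ffunE.
  rewrite -hf /mult_map -reidx; apply: eq_bigr => k _; by rewrite ffunE.
move=> c [sc hc]; apply/ffunP => k; rewrite ffunE.
have e : \sum_S cmul (c (h S)) (VS (@wt0 n) S) = \sum_S cmul (f S) (VS (@wt0 n) S).
  rewrite -[RHS]/(mult_map (@wt0 n) f) hf hc -reidx; apply: eq_bigr => k' _.
  by rewrite hg.
by rewrite -(coef_uniq tw e) hg.
Qed.
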